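(* Let $(\mathcal{M},\omega)$ be a symplectic manifold of dimension $2d$, $\pi:\mathcal{M}\to\mathcal{B}$ a fibration in compact connected Lagrangian tori, and $H=F\circ\pi$ with $F\in C^\infty(\mathcal{B})$ satisfying the Rüssmann condition. Then the set of points $b\in\mathcal{B}$ such that there is no nonzero $k\in E_b$ with $dF_b(k)=0$ (i.e. the set of tori $\pi^{-1}(b)$ on which the dynamics of the Hamiltonian vector field $X_H$ is ergodic) is dense in $\mathcal{B}$.
   Context: Near each point of $\mathcal{B}$ there are canonical action-angle coordinates $(x,\xi):\pi^{-1}(\mathcal{O})\to\mathbb{T}^d\times\mathbb{R}^d$, $\mathbb{T}^d=\mathbb{R}^d/\mathbb{Z}^d$. The Duistermaat connection $\nabla$ on $\mathcal{B}$ is the torsion-free flat connection for which the $d\xi_j$ are parallel. The resonance bundle $E\subset T\mathcal{B}$ is the lattice subbundle whose fiber $E_b$ is the $\mathbb{Z}$-span of $\partial/\partial\xi_1,\dots,\partial/\partial\xi_d$ at $b$ (dual to the lattice spanned by the $d\xi_j$); local sections of $E$ are parallel. On $\pi^{-1}(b)$, $X_H$ is the linear flow $\dot x_j=\partial F/\partial\xi_j(b)$, and a nonzero $k\in E_b$ with $dF_b(k)=\sum_jk_j\partial F/\partial\xi_j(b)=0$ is a resonance relation. Rüssmann condition: for every open $\mathcal{O}$ and every non-vanishing parallel vector field $X$ on $\mathcal{O}$, $dF(X)$ does not vanish identically on any nonempty open subset of $\mathcal{O}$. *)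

(* Defs.v *)
From HB Require Import structures.
From mathcomp Require Import all_boot all_order all_algebra.
From mathcomp Require Import all_classical all_reals all_analysis.
Set Implicit Arguments. Unset Strict Implicit. Unset Printing Implicit Defensive.
Import Order.TTheory GRing.Theory Num.Theory.
Import numFieldNormedType.Exports.
Local Open Scope classical_set_scope.
Local Open Scope ring_scope.

Notation coord R d := ('rV[R]_d).

Fixpoint iderive (R : realType) (d : nat) (vs : seq (coord R d))
    (f : coord R d -> R) : coord R d -> R :=
  match vs with
  | [::] => f
  | v :: vs' => fun x => 'D_v (iderive vs' f) x
  end.

Definition smooth_on (R : realType) (d : nat) (A : set (coord R d))
    (f : coord R d -> R) : Prop :=
  forall vs : seq (coord R d),
    (forall x, A x -> {for x, continuous (iderive vs f)}) /\
    (forall x v, A x -> derivable (iderive vs f) x v).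

(* An integral affine atlas on a topological space B (the structure induced
   on the base of a Lagrangian torus fibration by the action coordinates):
   charts phi i : U i -> R^d (the action coordinates xi), homeomorphisms onto
   open subsets, with left inverses psi i, whose transition maps are locally
   of the form xi |-> xi A + c with A in GL(d, Z). *)
Record int_affine_atlas (R : realType) (d : nat) (B : topologicalType) := {
  ch_idx : Type;
  ch_dom : ch_idx -> set B;
  ch_map : ch_idx -> B -> coord R d;
  ch_inv : ch_idx -> coord R d -> B;
  ch_dom_open : forall i, open (ch_dom i);
  ch_cover : forall b, exists i, ch_dom i b;
  ch_cont : forall i, {within ch_dom i, continuous (ch_map i)};
  ch_openmap : forall i (W : set B), open W -> W `<=` ch_dom i ->
      open (ch_map i @` W);
  ch_invK : forall i b, ch_dom i b -> ch_inv i (ch_map i b) = b;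
  ch_trans : forall i j b, ch_dom i b -> ch_dom j b ->
      exists W : set B, [/\ open W, W b &
      exists (A : 'M[int]_d) (c : coord R d),
        (\det A = 1 \/ \det A = -1) /\
        forall b', W b' -> ch_dom i b' -> ch_dom j b' ->
          ch_map j b' = ch_map i b' *m map_mx (fun z : int => z%:~R) A + c]
}.

Arguments ch_idx {R d B}.
Arguments ch_dom {R d B} _ _.
Arguments ch_map {R d B} _ _.
Arguments ch_inv {R d B} _ _.

Section Defs.
Variables (R : realType) (d : nat) (B : topologicalType)
  (atl : int_affine_atlas R d B).

Definition smooth_fun (F : B -> R) : Prop :=
  forall i, smooth_on (ch_map atl i @` ch_dom atl i) (F \o ch_inv atl i).

(* dF_b(v), for v a tangent vector atl b given by its components in chart i
   (i.e. v = sum_j v_j d/dxi_j). *)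
Definition dF_chart (F : B -> R) (i : ch_idx atl) (b : B) (v : coord R d) : R :=
  'D_v (F \o ch_inv atl i) (ch_map atl i b).

(* No resonance atl b: no nonzero k in E_b (the Z-span of the d/dxi_j) with
   dF_b(k) = 0. (Stated in every chart containing b; the condition is
   chart independent.) *)
Definition nonresonant (F : B -> R) (b : B) : Prop :=
  forall i, ch_dom atl i b ->
  forall k : 'rV[int]_d, k != 0 ->
    dF_chart F i b (map_mx (fun z : int => z%:~R) k) != 0.

(* A vector field on O, given by its components X i b in each chart i
   (meaningful for b in O and in the chart domain). *)
Definition vector_field_on (O : set B) (X : ch_idx atl -> B -> coord R d) :=
  forall i j b, O b -> ch_dom atl i b -> ch_dom atl j b ->
    X j b = 'D_(X i b) (ch_map atl j \o ch_inv atl i) (ch_map atl i b).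

(* Parallel for the Duistermaat connection: components (w.r.t. the parallel
   frame d/dxi) are locally constant. *)
Definition parallel_on (O : set B) (X : ch_idx atl -> B -> coord R d) :=
  vector_field_on O X /\
  forall i b, O b -> ch_dom atl i b ->
    exists W : set B, [/\ open W, W b &
      forall b', W b' -> O b' -> ch_dom atl i b' -> X i b' = X i b].

Definition nonvanishing_on (O : set B) (X : ch_idx atl -> B -> coord R d) :=
  forall i b, O b -> ch_dom atl i b -> X i b != 0.

Definition russmann (F : B -> R) : Prop :=
  forall (O : set B) (X : ch_idx atl -> B -> coord R d),
    open O -> parallel_on O X -> nonvanishing_on O X ->
    forall W : set B, open W -> W `<=` O -> W !=set0 ->
      ~ (forall i b, W b -> ch_dom atl i b -> dF_chart F i b (X i b) = 0).

End Defs.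

(* Main.v *)
Require Import Defs.
From HB Require Import structures.
From mathcomp Require Import all_boot all_order all_algebra.
From mathcomp Require Import all_classical all_reals all_analysis.
Import Order.TTheory GRing.Theory Num.Theory.
Import numFieldNormedType.Exports.
Local Open Scope classical_set_scope.
Local Open Scope ring_scope.
Set Implicit Arguments. Unset Strict Implicit.

Lemma fmap_near_eq {T U : Type} {F : set_system T} {FF : Filter F} (f g : T -> U) :
  (\forall x \near F, f x = g x) -> fmap f F = fmap g F.
Proof.
move=> e0; have e : F (fun x => f x = g x) := e0.
apply/funext => P; apply/propext; rewrite /fmap /=.
split => HP.
  move: HP e; apply: filterS2 => x /= + fg; by rewrite -fg.
move: HP e; apply: filterS2 => x /= + fg; by rewrite fg.
Qed.

Lemma Dchain (R : realType) (d : nat) (W : normedModType R)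
  (f g : 'rV[R]_d -> W) (M : 'M[R]_d) (c x v : 'rV[R]_d) (N : set 'rV[R]_d) :
  open N -> N x -> (forall y, N y -> f y = g (y *m M + c)) ->
  'D_v f x = 'D_(v *m M) g (x *m M + c).
Proof.
move=> oN Nx fg; rewrite /derive; congr lim.
have nearN : (0 : R)^' (fun h => N (h *: v + x)).
  apply: (@cvg_within _ (nbhs (0:R))).
  have : (fun h : R => h *: v + x) @ (0 : R) --> x.
    have {2}-> : x = (0 : R) *: v + x by rewrite scale0r add0r.
    apply: cvgD; last exact: cvg_cst.
    by apply: cvgZl; exact: cvg_id.
  by apply; apply: open_nbhs_nbhs.
apply: fmap_near_eq; apply: filterS nearN => h Nh /=.
rewrite fg // (fg x) //. congr (_ *: (g _ - _)).
by rewrite mulmxDl scalemxAl addrA.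
Qed.

Section Charts.
Variables (R : realType) (d : nat) (B : topologicalType)
  (atl : int_affine_atlas R d B).
Local Notation imx M := (map_mx (fun z : int => z%:~R : R) M).
Local Notation dom := (ch_dom atl).
Local Notation chm := (ch_map atl).
Local Notation chi := (ch_inv atl).

Lemma open_pre i (N : set 'rV[R]_d) : open N -> open (dom i `&` chm i @^-1` N).
Proof.
move=> oN; have := @ch_cont _ _ _ atl i.
rewrite continuous_open_subspace; last exact: ch_dom_open.
by move/continuous_inP => /(_ (ch_dom_open i)); apply.
Qed.

Lemma trans_loc i0 i b : dom i0 b -> dom i b ->
  exists (A : 'M[int]_d) (c : 'rV[R]_d) (N : set 'rV[R]_d),
  [/\ \det A = 1 \/ \det A = -1, open N, N (chm i0 b),
      chm i0 b *m imx A + c = chm i b &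
      forall y, N y -> chi i (y *m imx A + c) = chi i0 y /\
                       chm i (chi i0 y) = y *m imx A + c].
Proof.
move=> h0 h1; have [W [oW Wb [A [c [dA HA]]]]] := ch_trans h0 h1.
exists A, c, (chm i0 @` (W `&` dom i0 `&` dom i)); split => //.
- apply: ch_openmap; last by move=> z [[]].
  by apply: openI; [apply: openI => //|]; apply: ch_dom_open.
- by exists b.
- by rewrite (HA b).
move=> y [b' [[Wb' d0] d1] <-]; rewrite (ch_invK d0) -(HA b') //.
by rewrite (ch_invK d1).
Qed.

Lemma imx_nz (k : 'rV[int]_d) : k != 0 -> imx k != 0.
Proof.
apply: contraNneq => /matrixP H; apply/eqP/matrixP => p q.
by have := H p q; rewrite !mxE => /eqP; rewrite intr_eq0 => /eqP.
Qed.

Lemma mulA_nz (k : 'rV[int]_d) (A : 'M[int]_d) :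
  (\det A = 1 \/ \det A = -1) -> k != 0 -> k *m A != 0.
Proof.
move=> dA; apply: contraNneq => kA0.
have uA : A \in unitmx by rewrite unitmxE; case: dA => ->; rewrite ?unitrN unitr1.
by rewrite -(mulmxK uA k) kA0 mul0mx.
Qed.

Lemma imxM (k : 'rV[int]_d) (A : 'M[int]_d) : imx (k *m A) = imx k *m imx A.
Proof. by rewrite map_mxM. Qed.


Lemma DF_trans (F : B -> R) i0 i b : dom i0 b -> dom i b ->
  exists A : 'M[int]_d, (\det A = 1 \/ \det A = -1) /\
  forall v, 'D_v (F \o chi i0) (chm i0 b) = 'D_(v *m imx A) (F \o chi i) (chm i b).
Proof.
move=> h0 h1; have [A [c [N [dA oN Nb Eb HN]]]] := trans_loc h0 h1.
exists A; split => // v; rewrite -Eb; apply: (Dchain _ oN Nb).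
by move=> y Ny /=; rewrite (proj1 (HN y Ny)).
Qed.

Lemma nonres_transfer (F : B -> R) i0 b : dom i0 b ->
  (forall k : 'rV[int]_d, k != 0 -> 'D_(imx k) (F \o chi i0) (chm i0 b) != 0) ->
  nonresonant atl F b.
Proof.
move=> h0 H i hi k k0; rewrite /dF_chart.
have [A [dA HD]] := DF_trans F hi h0.
rewrite HD -imxM; apply: H; exact: mulA_nz.
Qed.

Lemma no_flat (F : B -> R) i0 (k : 'rV[int]_d) (V : set 'rV[R]_d) :
  russmann atl F -> k != 0 -> open V -> V !=set0 -> V `<=` chm i0 @` dom i0 ->
  (forall y, V y -> 'D_(imx k) (F \o chi i0) y = 0) -> False.
Proof.
move=> Hr k0 oV [y0 Vy0] Vsub HV.
pose O := dom i0 `&` chm i0 @^-1` V.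
have oO : open O by apply: open_pre.
pose kr := imx k.
pose X := fun i b => 'D_kr (chm i \o chi i0) (chm i0 b).
have XK : forall i b, dom i0 b -> dom i b -> exists A : 'M[int]_d,
    exists2 N : set 'rV[R]_d, (\det A = 1 \/ \det A = -1) /\ open N /\ N (chm i0 b) &
    forall b', dom i0 b' -> N (chm i0 b') -> X i b' = kr *m imx A.
  move=> i b h0 h1; have [A [c [N [dA oN Nb Eb HN]]]] := trans_loc h0 h1.
  exists A, N; first by [].
  move=> b' h0' Nb'; rewrite /X.
  rewrite (@Dchain _ _ _ _ id (imx A) c _ _ _ oN Nb'); first by rewrite derive_id.
  by move=> y Ny /=; rewrite (proj2 (HN y Ny)).
apply: (Hr O X oO _ _ O oO (@subset_refl _ O)).
- split.
  + move=> i j b [h0 Vb] hi hj.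
    have [A [c [N [dA oN Nb Eb HN]]]] := trans_loc h0 hi.
    have XE : X i b = kr *m imx A.
      rewrite /X (@Dchain _ _ _ _ id (imx A) c _ _ _ oN Nb) ?derive_id //.
      by move=> y Ny /=; rewrite (proj2 (HN y Ny)).
    rewrite XE -Eb; apply: (Dchain _ oN Nb).
    by move=> y Ny /=; rewrite (proj1 (HN y Ny)).
  + move=> i b [h0 Vb] hi.
    have [A [N [dA [oN Nb]] XA]] := XK i b h0 hi.
    exists (dom i0 `&` chm i0 @^-1` N); split; [exact: open_pre | by [] |].
    by move=> b' [h0' Nb'] _ _; rewrite !XA.
- move=> i b [h0 Vb] hi.
  have [A [N [dA [oN Nb]] XA]] := XK i b h0 hi.
  rewrite XA // -imxM; apply: imx_nz; exact: mulA_nz.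
- have [b0 h0 E] := Vsub _ Vy0; exists b0; split => //; by rewrite /= E.
- move=> i b [h0 Vb] hi.
  have [A [c [N [dA oN Nb Eb HN]]]] := trans_loc h0 hi.
  have XE : X i b = kr *m imx A.
    rewrite /X (@Dchain _ _ _ _ id (imx A) c _ _ _ oN Nb) ?derive_id //.
    by move=> y Ny /=; rewrite (proj2 (HN y Ny)).
  rewrite /dF_chart XE -Eb -(@Dchain _ _ _ (F \o chi i0) (F \o chi i) (imx A) c _ _ _ oN Nb); first exact: HV.
  by move=> y Ny /=; rewrite (proj1 (HN y Ny)).
Qed.

End Charts.

HB.instance Definition _ (R : realType) (m n : nat) :=
  Uniform_isComplete.Build 'M[R]_(m,n) (@mx_complete R m n).

Theorem mainTheorem11 (R : realType) (d : nat) (B : topologicalType)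
  (atl : int_affine_atlas R d B) (F : B -> R) :
  smooth_fun atl F -> russmann atl F ->
  dense [set b | nonresonant atl F b].
Proof.
move=> Hs Hr U [b Ub] oU.
have [i0 hb] := ch_cover atl b.
pose G := ch_map atl i0 @` (U `&` ch_dom atl i0).
have oG : open G.
  apply: ch_openmap; last by move=> z [].
  by apply: openI => //; exact: ch_dom_open.
pose g := F \o ch_inv atl i0.
pose imx := @map_mx _ _ (fun z : int => z%:~R : R) 1 d.
pose e := fun n : nat => odflt (0 : 'rV[int]_d) (unpickle n).
pose S := fun n => [set y | G y /\ e n != 0 /\ 'D_(imx (e n)) g y = 0].
pose Un := fun n => ~` closure (S n).
have Hcont : forall (k : 'rV[R]_d) y, G y -> {for y, continuous (fun z => 'D_k g z)}.
  move=> k y [b' [Ub' hb'] <-]; have [H _] := Hs i0 [:: k]; apply: H; by exists b'.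
have HU : forall n, open (Un n) /\ dense (Un n).
  move=> n; split; first by apply: closed_openC; exact: closed_closure.
  move=> O [x Ox] oO.
  case: (pselect (O `&` Un n !=set0)) => // HN; exfalso.
  have Osub : O `<=` closure (S n).
    move=> z Oz; apply: contrapT => nz; apply: HN; by exists z.
  have [y1 [[Gy1 [en0 _]] Oy1]] := Osub x Ox O (open_nbhs_nbhs (conj oO Ox)).
  apply: (@no_flat R d B atl F i0 (e n) (O `&` G) Hr en0).
  - exact: openI.
  - by exists y1.
  - by move=> y [_ [b' [_ hb'] <-]]; exists b'.
  move=> y [Oy Gy]; apply: contrapT => /eqP Dy.
  have nb1 : nbhs y [set z | 'D_(imx (e n)) g z != 0].
    have H := Hcont (imx (e n)) y Gy [set r : R | r != 0].
    apply: H; apply: open_nbhs_nbhs; split => //.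
  have nb2 : nbhs y (O `&` G) by apply: open_nbhs_nbhs; split => //; exact: openI.
  have [z [[_ [_ Dz]] [Dz' _]]] := Osub y Oy _ (filterI nb1 nb2).
  by move: Dz' => /eqP; apply.
have Dn := Baire HU.
have [y [Gy Iy]] := Dn G (ex_intro _ _ (ex_intro2 _ _ b (conj Ub hb) erefl)) oG.
case: Gy => b0 [Ub0 hb0] Ey.
exists b0; split => //=.
apply: (nonres_transfer hb0) => k k0; apply/eqP => Hk.
have := Iy (pickle k) I; apply; apply: subset_closure.
rewrite /S /e pickleK /=; split; first by rewrite -Ey; exists b0.
by split => //; rewrite -Ey.
Qed.
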